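(* Let $0<\rho_1<1$. There is $\epsilon_0\in(0,1)$ such that for every $0<\epsilon<\epsilon_0$ there is $q_0$ (depending on $\rho_1$ and $\epsilon$) such that the following holds for every prime $q\ge q_0$. Let $S\subseteq\mathbb{Z}/q\mathbb{Z}$ with $|S|\ge\rho_1 q$, and let $h$ be an integer with $1\le h\le q-1$ such that $S'=\{hs\bmod q : s\in S\}$ satisfies: for every integer $a$ with $|a|\le q/2$ and $|f_{S'}(a/q)|>\epsilon|S|$ one has $|a|<q^{1-\rho_1\epsilon^2}$. Let $k$ be an integer, $v$ an integer with $1\le v<q^{\rho_1\epsilon^2/4}$, and $W=W(k,v)$. Let $u$ be real with $5vq^{-\rho_1\epsilon^2}\le|u|\le\frac12$, and let $a$ be an integer with $|u-a/q|\le \frac{1}{2q}$. Then for all integers $N\ge 0$, $H\ge 1$ with $[N+1,N+H]\subseteq[0,q-1]$, $$\left|\sum_{s\in W,\ N+1\le s\le N+H} e\left(\frac{sa}{q}\right)\right|\ <\ 2|S|\left(\frac{\epsilon H}{\rho_1 q}\right)^{1/3}.$$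
   Context: $e(u)=\exp(2\pi i u)$. For a finite set of integers $T$ (subsets of $\mathbb{Z}/q\mathbb{Z}$ being identified with their least nonnegative residues in $\{0,\dots,q-1\}$), $f_T(t)=\sum_{s\in T}e(st)$. Given $S,h$ as in the claim, an integer $k$ and an integer $v$ with $1\le v<q^{\rho_1\epsilon^2/4}$, $W(k,v)\subseteq\{0,1,\dots,q-1\}$ is the set of least nonnegative residues modulo $q$ of the numbers $(4v)^{-1}hs+k$, $s\in S$, where $(4v)^{-1}$ denotes the inverse of $4v$ modulo $q$. *)

(* Defs.v *)
From Stdlib Require Import Reals ZArith List Znumtheory.
Import ListNotations.
Open Scope R_scope.

Definition zrange (m n : Z) : list Z :=
  map (fun i => (m + Z.of_nat i)%Z) (seq 0 (Z.to_nat (n - m + 1))).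

(* |f_T(t)| = |sum_{s in T} e(s t)|, with e(x) = exp(2 pi i x) written via cos/sin *)
Definition e_abs (T : list Z) (t : R) : R :=
  sqrt ((fold_right Rplus 0 (map (fun s => cos (2 * PI * IZR s * t)) T)) ^ 2
      + (fold_right Rplus 0 (map (fun s => sin (2 * PI * IZR s * t)) T)) ^ 2).

(* A subset of Z/qZ is represented by a boolean predicate on least
   nonnegative residues; its elements are the s in [0, q-1] with S s. *)
Definition setZ (q : Z) (S : Z -> bool) : list Z := filter S (zrange 0 (q - 1)).

Definition cardZ (q : Z) (S : Z -> bool) : Z := Z.of_nat (length (setZ q S)).

Definition dilate (q h : Z) (S : Z -> bool) : Z -> bool :=
  fun t => existsb (fun s => Z.eqb ((h * s) mod q) t) (setZ q S).

(* W(k,v) = { ((4v)^{-1} h s + k) mod q : s in S }, where winv is (a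
   representative of) the inverse of 4v modulo q *)
Definition Wset (q h k winv : Z) (S : Z -> bool) : Z -> bool :=
  fun t => existsb (fun s => Z.eqb ((winv * h * s + k) mod q) t) (setZ q S).

(* Main.v *)
Require Import Defs.
From Stdlib Require Import Reals ZArith List Znumtheory Lra Lia Psatz Permutation.
From Coquelicot Require Import Complex.
Import ListNotations.
Open Scope R_scope.

Definition ee (t : R) : C := (cos (2*PI*t), sin (2*PI*t)).

Lemma ee_add s t : ee (s+t) = (ee s * ee t)%C.
Proof.
  unfold ee, Cmult; simpl. rewrite Rmult_plus_distr_l, cos_plus, sin_plus.
  f_equal; ring.
Qed.

Lemma trig_per_Z (x : R) (n : Z) :
  cos (x + 2 * PI * IZR n) = cos x /\ sin (x + 2 * PI * IZR n) = sin x.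
Proof.
  destruct (Z_le_gt_dec 0 n) as [Hn|Hn].
  - rewrite <- (Z2Nat.id n Hn), <- INR_IZR_INZ.
    replace (x + 2 * PI * INR (Z.to_nat n)) with (x + 2 * INR (Z.to_nat n) * PI) by ring.
    split; [apply cos_period | apply sin_period].
  - assert (H0 : (0 <= - n)%Z) by lia.
    assert (Hx : x = (x + 2 * PI * IZR n) + 2 * INR (Z.to_nat (- n)) * PI).
    { rewrite INR_IZR_INZ, Z2Nat.id by lia. rewrite opp_IZR. ring. }
    split.
    + rewrite Hx at 2. symmetry; apply cos_period.
    + rewrite Hx at 2. symmetry; apply sin_period.
Qed.

Lemma ee_int n : ee (IZR n) = 1%C.
Proof.
  unfold ee. destruct (trig_per_Z 0 n) as [H1 H2].
  rewrite Rplus_0_l in H1, H2. rewrite H1, H2, cos_0, sin_0. reflexivity.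
Qed.

Lemma ee_per t n : ee (t + IZR n) = ee t.
Proof. rewrite ee_add, ee_int. apply Cmult_1_r. Qed.

Lemma Cmod_ee t : Cmod (ee t) = 1.
Proof.
  unfold Cmod, ee; simpl. pose proof (sin2_cos2 (2*PI*t)). unfold Rsqr in H.
  replace (cos (2 * PI * t) * (cos (2 * PI * t) * 1) + sin (2 * PI * t) * (sin (2 * PI * t) * 1)) with 1 by lra.
  apply sqrt_1.
Qed.

Lemma ee_opp t : ee (- t) = Cconj (ee t).
Proof.
  unfold ee, Cconj; simpl. rewrite <- Ropp_mult_distr_r, cos_neg, sin_neg. reflexivity.
Qed.

Lemma ee0 : ee 0 = 1%C.
Proof. replace 0 with (IZR 0) by reflexivity. apply ee_int. Qed.

Lemma ee_sub1_sq t : Cmod (ee t - 1) ^ 2 = 2 - 2 * cos (2*PI*t).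
Proof.
  unfold Cmod, ee; simpl. repeat rewrite Rmult_1_r. rewrite sqrt_sqrt.
  - pose proof (sin2_cos2 (2*PI*t)). unfold Rsqr in H. nra.
  - apply Rplus_le_le_0_compat; apply Rle_0_sqr.
Qed.

Lemma PI_gt_3 : 3 < PI.
Proof. pose proof PI2_3_2. lra. Qed.

Lemma cos_gap (d t : R) : 0 < d <= 1/6 -> d <= t <= 1 - d ->
  2 - 2 * cos (2*PI*t) >= 9 * d^2.
Proof.
  intros Hd Ht. pose proof PI_gt_3. pose proof PI_4.
  assert (Hc : cos (2*PI*t) <= cos (2*PI*d)).
  { destruct (Rle_dec t (1/2)).
    - apply cos_decr_1; nra.
    - replace (2*PI*t) with (- (2*PI*(1-t)) + 2 * PI * IZR 1) by (simpl; ring).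
      rewrite (proj1 (trig_per_Z _ _)), cos_neg. apply cos_decr_1; nra. }
  replace (2*PI*d) with (2 * (PI * d)) in Hc by ring.
  rewrite cos_2a_sin in Hc.
  assert (Hs : PI * d / 2 <= sin (PI * d)).
  { destruct (SIN (PI*d)) as [Hl _]; try nra.
    unfold sin_lb, sin_approx in Hl. simpl in Hl.
    unfold sin_term in Hl. simpl in Hl. 
    assert (PI * d <= 1) by nra.
    assert (0 <= PI*d) by nra.
    set (x := PI * d) in *. clearbody x.
    field_simplify in Hl.
    assert (0 <= x^5) by (apply pow_le; lra).
    assert (x^7 <= x^5).
    { replace (x^7) with (x^5 * (x*x)) by ring. 
      assert (x*x <= 1) by nra. 
      pose proof (Rmult_le_compat_l (x^5) _ _ H3 H4). lra. }
    assert (x^3 <= x).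
    { replace (x^3) with (x * (x*x)) by ring.
      assert (x*x <= 1) by nra. 
      pose proof (Rmult_le_compat_l x _ _ H2 H5). lra. }
    lra. }
  assert (0 <= PI*d/2) by nra.
  assert (Hs2 : (PI*d/2)*(PI*d/2) <= sin (PI*d) * sin (PI*d)) by (apply Rmult_le_compat; lra).
  assert (Hp : 9 * (d*d) <= PI*PI*(d*d)).
  { apply Rmult_le_compat_r; [nra|]. nra. }
  simpl. nra.
Qed.

Definition csum (l : list Z) (f : Z -> C) : C := fold_right Cplus 0%C (map f l).
Definition rsum (l : list Z) (f : Z -> R) : R := fold_right Rplus 0 (map f l).

Lemma csum_nil f : csum [] f = 0%C. Proof. reflexivity. Qed.
Lemma csum_cons x l f : csum (x :: l) f = (f x + csum l f)%C. Proof. reflexivity. Qed.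
Lemma rsum_nil f : rsum [] f = 0. Proof. reflexivity. Qed.
Lemma rsum_cons x l f : rsum (x :: l) f = f x + rsum l f. Proof. reflexivity. Qed.

Lemma csum_app l1 l2 f : csum (l1 ++ l2) f = (csum l1 f + csum l2 f)%C.
Proof.
  induction l1; simpl. - rewrite Cplus_0_l; auto.
  - rewrite !csum_cons, IHl1. ring.
Qed.
Lemma rsum_app l1 l2 f : rsum (l1 ++ l2) f = rsum l1 f + rsum l2 f.
Proof.
  induction l1; simpl. - rewrite rsum_nil; ring.
  - rewrite !rsum_cons, IHl1. ring.
Qed.

Lemma csum_ext l f g : (forall x, In x l -> f x = g x) -> csum l f = csum l g.
Proof.
  induction l; intros H; auto. rewrite !csum_cons, H, IHl; auto.
  intros; apply H; simpl; auto. simpl; auto.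
Qed.
Lemma rsum_ext l f g : (forall x, In x l -> f x = g x) -> rsum l f = rsum l g.
Proof.
  induction l; intros H; auto. rewrite !rsum_cons, H, IHl; auto.
  intros; apply H; simpl; auto. simpl; auto.
Qed.

Lemma csum_scal l c f : csum l (fun x => c * f x)%C = (c * csum l f)%C.
Proof. induction l; [unfold csum; simpl; ring|]. rewrite !csum_cons, IHl. ring. Qed.
Lemma rsum_scal l c f : rsum l (fun x => c * f x) = c * rsum l f.
Proof. induction l; [unfold rsum; simpl; ring|]. rewrite !rsum_cons, IHl. ring. Qed.

Lemma csum_add l f g : csum l (fun x => f x + g x)%C = (csum l f + csum l g)%C.
Proof. induction l; [unfold csum; simpl; ring|]. rewrite !csum_cons, IHl. ring. Qed.
Lemma rsum_add l f g : rsum l (fun x => f x + g x) = rsum l f + rsum l g.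
Proof. induction l; [unfold rsum; simpl; ring|]. rewrite !rsum_cons, IHl. ring. Qed.

Lemma csum_zero l : csum l (fun _ => 0%C) = 0%C.
Proof. induction l; auto. rewrite csum_cons, IHl. ring. Qed.

Lemma csum_swap l1 l2 (f : Z -> Z -> C) :
  csum l1 (fun x => csum l2 (f x)) = csum l2 (fun y => csum l1 (fun x => f x y)).
Proof.
  induction l1; simpl.
  - rewrite csum_nil. symmetry. apply csum_zero.
  - rewrite csum_cons, IHl1. rewrite <- csum_add. apply csum_ext. intros. rewrite csum_cons. reflexivity.
Qed.

Lemma csum_perm l1 l2 f : Permutation l1 l2 -> csum l1 f = csum l2 f.
Proof.
  induction 1; auto.
  - rewrite !csum_cons, IHPermutation; auto.
  - rewrite !csum_cons; ring.
  - congruence.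
Qed.

Lemma csum_filter P l f : csum (filter P l) f = csum l (fun x => if P x then f x else 0%C).
Proof.
  induction l; auto. simpl. rewrite (csum_cons a l). destruct (P a); rewrite ?csum_cons, IHl; ring.
Qed.

Lemma csum_map g l f : csum (map g l) f = csum l (fun x => f (g x)).
Proof. unfold csum. rewrite map_map. reflexivity. Qed.
Lemma rsum_map g l f : rsum (map g l) f = rsum l (fun x => f (g x)).
Proof. unfold rsum. rewrite map_map. reflexivity. Qed.

Lemma Cmod_csum l f : Cmod (csum l f) <= rsum l (fun x => Cmod (f x)).
Proof.
  induction l. - rewrite csum_nil, Cmod_0, rsum_nil; lra.
  - rewrite csum_cons, rsum_cons. eapply Rle_trans. apply Cmod_triangle. lra.
Qed.

Lemma rsum_le l f g : (forall x, In x l -> f x <= g x) -> rsum l f <= rsum l g.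
Proof.
  induction l; intros H. - rewrite !rsum_nil; lra.
  - rewrite !rsum_cons. assert (f a <= g a) by (apply H; simpl; auto).
    assert (rsum l f <= rsum l g) by (apply IHl; intros; apply H; simpl; auto). lra.
Qed.

Lemma rsum_const l c : rsum l (fun _ => c) = INR (length l) * c.
Proof. induction l. - rewrite rsum_nil; simpl; ring. - rewrite rsum_cons, IHl. simpl length. rewrite S_INR. ring. Qed.

Lemma csum_const l c : csum l (fun _ => c) = (RtoC (INR (length l)) * c)%C.
Proof. induction l. - rewrite csum_nil; simpl; ring. - rewrite csum_cons, IHl. simpl length. rewrite S_INR, RtoC_plus. ring. Qed.

Lemma rsum_nonneg l f : (forall x, In x l -> 0 <= f x) -> 0 <= rsum l f.
Proof. intros H.
  replace 0 with (rsum l (fun _ => 0)) by (rewrite rsum_const; ring). apply rsum_le; auto. Qed.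

Lemma RtoC_rsum l f : RtoC (rsum l f) = csum l (fun x => RtoC (f x)).
Proof. induction l; auto. rewrite rsum_cons, csum_cons, <- IHl, RtoC_plus. reflexivity. Qed.

Lemma csum_delta l z (P : Z -> bool) g : NoDup l -> In z l ->
  (forall y, In y l -> P y = true <-> y = z) ->
  csum l (fun y => if P y then g y else 0%C) = g z.
Proof.
  induction l; intros Hnd Hin HP. - destruct Hin.
  - inversion Hnd; subst. rewrite csum_cons. destruct Hin as [<-|Hin].
    + assert (P a = true) by (apply HP; simpl; auto). rewrite H.
      rewrite (csum_ext _ _ (fun _ => 0%C)). rewrite csum_zero; ring.
      intros y Hy. destruct (P y) eqn:E; auto. apply HP in E; [subst; contradiction|simpl;auto].
    + assert (P a = false). { destruct (P a) eqn:E; auto. apply HP in E; [subst; contradiction|simpl;auto]. }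
      rewrite H, IHl; auto. ring. intros; apply HP; simpl; auto.
Qed.

Lemma zrange_In m n x : In x (zrange m n) <-> (m <= x <= n)%Z.
Proof.
  unfold zrange. rewrite in_map_iff. split.
  - intros [i [<- Hi]]. apply in_seq in Hi. lia.
  - intros H. exists (Z.to_nat (x - m)). split. lia. apply in_seq. lia.
Qed.

Lemma zrange_NoDup m n : NoDup (zrange m n).
Proof.
  unfold zrange. apply FinFun.Injective_map_NoDup. intros i j H. lia. apply seq_NoDup.
Qed.

Lemma zrange_length m n : length (zrange m n) = Z.to_nat (n - m + 1).
Proof. unfold zrange. rewrite length_map, length_seq. reflexivity. Qed.

Lemma zrange_succ_r m n : (m <= n + 1)%Z -> zrange m (n + 1) = zrange m n ++ [n + 1]%Z.
Proof.
  intros H. unfold zrange. replace (Z.to_nat (n + 1 - m + 1)) with (S (Z.to_nat (n - m + 1))) by lia.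
  rewrite seq_S, map_app. simpl. f_equal. f_equal. lia.
Qed.

Lemma zrange_empty m n : (n < m)%Z -> zrange m n = [].
Proof. intros. unfold zrange. replace (Z.to_nat (n - m + 1)) with 0%nat by lia. reflexivity. Qed.

Lemma zrange_cons m n : (m <= n)%Z -> zrange m n = m :: zrange (m + 1) n.
Proof.
  intros H. unfold zrange. replace (Z.to_nat (n - m + 1)) with (S (Z.to_nat (n - (m + 1) + 1))) by lia.
  rewrite <- cons_seq. simpl. f_equal. lia. rewrite <- seq_shift, map_map. apply map_ext. intros. lia.
Qed.

Lemma csum_zrange_shift m n j f :
  csum (zrange m n) (fun x => f (x + j)%Z) = csum (zrange (m + j) (n + j)) f.
Proof.
  unfold zrange, csum. rewrite !map_map. replace (n + j - (m + j) + 1)%Z with (n - m + 1)%Z by lia.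
  f_equal. apply map_ext. intros. f_equal. lia.
Qed.

Definition E (q u : Z) : C := ee (IZR u / IZR q).

Lemma E_add q u v : (E q u * E q v)%C = E q (u + v).
Proof. unfold E. rewrite <- ee_add. f_equal. rewrite plus_IZR. unfold Rdiv. ring. Qed.

Lemma E_conj q u : Cconj (E q u) = E q (- u).
Proof. unfold E. rewrite <- ee_opp. f_equal. rewrite opp_IZR. unfold Rdiv. ring. Qed.

Lemma Cmod_E q u : Cmod (E q u) = 1.
Proof. apply Cmod_ee. Qed.

Lemma E_per q u k : (q <> 0)%Z -> E q (u + q * k) = E q u.
Proof.
  intros Hq. unfold E. rewrite <- (ee_per (IZR u / IZR q) k). f_equal. rewrite plus_IZR, mult_IZR.
  field. apply not_0_IZR; auto.
Qed.

Lemma E_mod q u : (q <> 0)%Z -> E q u = E q (u mod q).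
Proof.
  intros Hq. rewrite (Z.div_mod u q Hq) at 1. rewrite Z.add_comm. apply E_per; auto.
Qed.

Lemma E_0 q : E q 0 = 1%C.
Proof. unfold E. unfold Rdiv. rewrite Rmult_0_l. apply ee0. Qed.

Lemma E_q q : (q <> 0)%Z -> E q q = 1%C.
Proof. intros. rewrite <- (E_0 q). rewrite <- (E_per q 0 1) by auto. f_equal. ring. Qed.

Lemma geomE q m x0 (K : nat) :
  ((E q m - 1) * csum (zrange x0 (x0 + Z.of_nat K - 1)) (fun x => E q (x * m)))%C
  = (E q ((x0 + Z.of_nat K) * m) - E q (x0 * m))%C.
Proof.
  induction K.
  - rewrite zrange_empty by lia. rewrite csum_nil. replace (x0 + Z.of_nat 0)%Z with x0 by lia. ring.
  - replace (x0 + Z.of_nat (S K) - 1)%Z with ((x0 + Z.of_nat K - 1) + 1)%Z by lia.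
    rewrite zrange_succ_r by lia. rewrite csum_app, csum_cons, csum_nil.
    rewrite Cmult_plus_distr_l, IHK.
    replace (x0 + Z.of_nat K - 1 + 1)%Z with (x0 + Z.of_nat K)%Z by lia.
    replace ((x0 + Z.of_nat (S K)) * m)%Z with (m + (x0 + Z.of_nat K) * m)%Z by lia.
    rewrite <- E_add. ring.
Qed.

Lemma Cmod_E_sub1 q r : (6 <= q)%Z -> (1 <= r <= q - 1)%Z ->
  Cmod (E q r - 1) ^ 2 >= 9 / (IZR q)^2.
Proof.
  intros Hq Hr. unfold E. rewrite ee_sub1_sq.
  assert (H6 : 6 <= IZR q) by (apply IZR_le; lia).
  assert (H1 : 1 <= IZR r) by (apply IZR_le; lia).
  assert (H2 : IZR r <= IZR q - 1) by (rewrite <- minus_IZR; apply IZR_le; lia).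
  replace (9 / IZR q ^ 2) with (9 * (/ IZR q)^2) by (field; lra).
  apply cos_gap.
  - split. apply Rinv_0_lt_compat; lra. 
    apply (Rmult_le_reg_l (IZR q)); [lra|]. field_simplify; lra.
  - split.
    + apply (Rmult_le_reg_l (IZR q)); [lra|]. field_simplify; lra.
    + apply (Rmult_le_reg_l (IZR q)); [lra|]. field_simplify; lra.
Qed.

Lemma C_cancel (z s : C) : z <> 0%C -> (z * s)%C = 0%C -> s = 0%C.
Proof. intros Hz H. replace s with (/ z * (z * s))%C by (field; auto). rewrite H. ring. Qed.

Lemma orth q m : (6 <= q)%Z ->
  csum (zrange 0 (q - 1)) (fun b => E q (b * m)) =
  if (m mod q =? 0)%Z then RtoC (IZR q) else 0%C.
Proof.
  intros Hq. assert (Hq0 : (q <> 0)%Z) by lia.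
  destruct (Z.eqb_spec (m mod q) 0) as [H0|H0].
  - rewrite (csum_ext _ _ (fun _ => 1%C)).
    + rewrite csum_const, zrange_length. rewrite Cmult_1_r. f_equal.
      rewrite INR_IZR_INZ. f_equal. lia.
    + intros b _. rewrite E_mod by auto. rewrite Z.mul_mod, H0 by auto. rewrite Z.mul_0_r, Z.mod_0_l by auto. apply E_0.
  - pose proof (geomE q m 0 (Z.to_nat q)) as G.
    replace (0 + Z.of_nat (Z.to_nat q) - 1)%Z with (q - 1)%Z in G by lia.
    replace ((0 + Z.of_nat (Z.to_nat q)) * m)%Z with (0 + q * m)%Z in G by lia.
    rewrite E_per, Z.mul_0_l in G by auto. replace (E q 0 - E q 0)%C with (RtoC 0) in G by ring.
    apply C_cancel in G; auto.
    rewrite E_mod by auto. intro Hc.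
    pose proof (Cmod_E_sub1 q (m mod q) Hq) as Hb.
    rewrite Hc in Hb. replace (1 - 1)%C with (RtoC 0) in Hb by ring. rewrite Cmod_0 in Hb.
    assert (0 < 9 / IZR q ^ 2). { apply Rdiv_lt_0_compat. lra. apply pow_lt. apply IZR_lt. lia. }
    assert (0 <= m mod q < q)%Z by (apply Z.mod_pos_bound; lia).
    assert (1 <= m mod q <= q - 1)%Z by lia.
    specialize (Hb H2). simpl in Hb, H. lra.
Qed.

Lemma fst_csum l f : fst (csum l f) = rsum l (fun x => fst (f x)).
Proof. induction l; auto. rewrite csum_cons, rsum_cons, <- IHl. reflexivity. Qed.
Lemma snd_csum l f : snd (csum l f) = rsum l (fun x => snd (f x)).
Proof. induction l; auto. rewrite csum_cons, rsum_cons, <- IHl. reflexivity. Qed.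

Lemma e_abs_csum T t : e_abs T t = Cmod (csum T (fun s => ee (IZR s * t))).
Proof.
  unfold e_abs, Cmod. rewrite fst_csum, snd_csum. unfold rsum. f_equal. f_equal; f_equal; f_equal;
  apply map_ext; intros; unfold ee; simpl; rewrite Rmult_assoc; reflexivity.
Qed.

Lemma e_abs_E T q a : e_abs T (IZR a / IZR q) = Cmod (csum T (fun s => E q (s * a))).
Proof.
  rewrite e_abs_csum. f_equal. apply csum_ext. intros. unfold E. f_equal. rewrite mult_IZR. unfold Rdiv. ring.
Qed.

Lemma Cconj_csum l f : Cconj (csum l f) = csum l (fun x => Cconj (f x)).
Proof.
  induction l. - unfold csum; simpl. apply injective_projections; simpl; ring.
  - rewrite !csum_cons, Cplus_conj, IHl. reflexivity.
Qed.

Lemma csum_scal_r l c f : csum l (fun x => f x * c)%C = (csum l f * c)%C.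
Proof. rewrite Cmult_comm, <- csum_scal. apply csum_ext. intros; ring. Qed.

Lemma csum_mul l1 l2 f g :
  (csum l1 f * csum l2 g)%C = csum l1 (fun x => csum l2 (fun y => f x * g y))%C.
Proof.
  rewrite <- csum_scal_r. apply csum_ext. intros. rewrite csum_scal. reflexivity.
Qed.

Lemma RtoC_inj' x y : RtoC x = RtoC y -> x = y.
Proof. intros H. apply (f_equal fst) in H. simpl in H. auto. Qed.

Lemma modq_eq_iff q x y : (0 < q)%Z -> (0 <= y < q)%Z -> ((x - y) mod q = 0)%Z <-> y = (x mod q).
Proof.
  intros Hq Hy. rewrite <- Z.cong_iff_0. rewrite (Z.mod_small y) by auto. split; auto.
Qed.

Lemma parseval q l c : (6 <= q)%Z -> NoDup l ->
  (forall x y, In x l -> In y l -> ((x - y) mod q = 0)%Z -> x = y) ->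
  rsum (zrange 0 (q - 1)) (fun b => Cmod (csum l (fun x => c x * E q (b * x))%C) ^ 2)
  = IZR q * rsum l (fun x => Cmod (c x) ^ 2).
Proof.
  intros Hq Hnd Hl. apply RtoC_inj'. rewrite RtoC_rsum, RtoC_mult, RtoC_rsum.
  rewrite (csum_ext _ _ (fun b => csum l (fun x => csum l (fun y =>
      c x * Cconj (c y) * E q (b * (x - y))))))%C.
  2:{ intros b _. rewrite Cmod2_conj, Cconj_csum, csum_mul. apply csum_ext. intros x _.
      apply csum_ext. intros y _. rewrite Cmult_conj, E_conj.
      replace (b * (x - y))%Z with (b * x + - (b * y))%Z by ring. rewrite <- E_add. ring. }
  rewrite csum_swap. rewrite <- csum_scal. apply csum_ext. intros x Hx.
  rewrite csum_swap.
  rewrite (csum_ext _ _ (fun y => if ((x - y) mod q =? 0)%Z then (c x * Cconj (c y) * IZR q)%C else 0%C)).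
  - rewrite (csum_delta l x). rewrite Cmod2_conj. ring. auto. auto.
    intros y Hy. rewrite Z.eqb_eq. split; intros H.
    + symmetry; apply Hl; auto.
    + subst. rewrite Z.sub_diag. apply Z.mod_0_l. lia.
  - intros y Hy. rewrite csum_scal.
    rewrite orth by auto. destruct (_ =? _)%Z; ring.
Qed.

Definition Fhat (q : Z) (F : Z -> C) (b : Z) : C :=
  csum (zrange 0 (q - 1)) (fun y => F y * E q (b * y))%C.

Lemma inversion q F z : (6 <= q)%Z -> (forall y, F y = F (y mod q)) ->
  F z = (/ IZR q * csum (zrange 0 (q - 1)) (fun b => Fhat q F b * E q (- (b * z))))%C.
Proof.
  intros Hq HF. unfold Fhat.
  rewrite (csum_ext _ _ (fun b => csum (zrange 0 (q - 1)) (fun y => F y * E q (b * (y - z)))))%C.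
  2:{ intros b _. rewrite <- csum_scal_r. apply csum_ext. intros y _. 
      rewrite <- Cmult_assoc, E_add. f_equal. f_equal. ring. }
  rewrite csum_swap.
  rewrite (csum_ext _ _ (fun y => if ((y - z) mod q =? 0)%Z then (F y * IZR q)%C else 0%C)).
  - rewrite (csum_delta _ (z mod q)).
    + rewrite <- HF. field. intro H. apply RtoC_inj' in H. apply (not_0_IZR q); [lia|auto].
    + apply zrange_NoDup.
    + apply zrange_In. pose proof (Z.mod_pos_bound z q). lia.
    + intros y Hy. apply zrange_In in Hy. rewrite Z.eqb_eq.
      rewrite <- Z.cong_iff_0, (Z.mod_small y) by lia. split; auto.
  - intros y _. rewrite csum_scal. rewrite orth by auto. destruct (_ =? _)%Z; ring.
Qed.

Lemma zrange_modinj q m n : (0 < q)%Z -> (n - m < q)%Z ->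
  forall x y, In x (zrange m n) -> In y (zrange m n) -> ((x - y) mod q = 0)%Z -> x = y.
Proof.
  intros Hq Hmn x y Hx Hy H. apply zrange_In in Hx, Hy.
  apply Z.mod_divide in H; [|lia]. destruct H as [k Hk].
  destruct (Z.lt_trichotomy k 0) as [Hk0|[Hk0|Hk0]]; [nia|subst; lia|nia].
Qed.

Lemma shift_diff (G : Z -> C) M H : (forall y, Cmod (G y) <= 1) -> (1 <= H)%Z ->
  Cmod (csum (zrange (M + 1) (M + H)) G - csum (zrange (M + 1) (M + H)) (fun x => G (x + 1)%Z)) <= 2.
Proof.
  intros HG HH. rewrite csum_zrange_shift.
  rewrite (zrange_cons (M + 1)) by lia.
  replace (M + H + 1)%Z with ((M + H) + 1)%Z by ring.
  rewrite zrange_succ_r by lia. rewrite csum_cons, csum_app, csum_cons, csum_nil.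
  replace (M + 1 + 1)%Z with (M + 1 + 1)%Z by ring.
  replace (G (M + 1)%Z + csum (zrange (M + 1 + 1) (M + H)) G -
    (csum (zrange (M + 1 + 1) (M + H)) G + (G (M + H + 1)%Z + 0)))%C
    with (G (M + 1)%Z + - G (M + H + 1)%Z)%C by ring.
  eapply Rle_trans. apply Cmod_triangle. rewrite Cmod_opp. pose proof (HG (M+1)%Z). pose proof (HG (M+H+1)%Z). lra.
Qed.

Lemma shift_diff_j (F : Z -> C) N H (j : nat) : (forall y, Cmod (F y) <= 1) -> (1 <= H)%Z ->
  Cmod (csum (zrange (N + 1) (N + H)) F - csum (zrange (N + 1) (N + H)) (fun x => F (x + Z.of_nat j)%Z)) <= 2 * INR j.
Proof.
  intros HF HH. induction j.
  - change (Z.of_nat 0) with 0%Z. rewrite (csum_ext _ (fun x => F (x + 0)%Z) F) by (intros; f_equal; lia). simpl INR.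
    replace (csum (zrange (N + 1) (N + H)) F - csum (zrange (N + 1) (N + H)) F)%C with (RtoC 0) by ring.
    rewrite Cmod_0. lra.
  - rewrite S_INR.
    replace (csum (zrange (N + 1) (N + H)) F - csum (zrange (N + 1) (N + H)) (fun x => F (x + Z.of_nat (S j))%Z))%C
      with ((csum (zrange (N + 1) (N + H)) F - csum (zrange (N + 1) (N + H)) (fun x => F (x + Z.of_nat j)%Z))
           + (csum (zrange (N + 1) (N + H)) (fun x => F (x + Z.of_nat j)%Z) -
              csum (zrange (N + 1) (N + H)) (fun x => (fun y => F (y + Z.of_nat j)%Z) (x + 1)%Z)))%C.
    + eapply Rle_trans. apply Cmod_triangle.
      pose proof (shift_diff (fun y => F (y + Z.of_nat j)%Z) N H (fun y => HF _) HH). lra.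
    + rewrite (csum_ext _ (fun x => (fun y => F (y + Z.of_nat j)%Z) (x + 1)%Z) (fun x => F (x + Z.of_nat (S j))%Z)).
      ring. intros; simpl; f_equal; lia.
Qed.

Lemma Cmod_RtoC_mult (r : R) (z : C) : Cmod (RtoC r * z) = Rabs r * Cmod z.
Proof. rewrite Cmod_mult, Cmod_R. reflexivity. Qed.

Lemma smooth (F : Z -> C) N H L : (forall y, Cmod (F y) <= 1) -> (1 <= H)%Z -> (1 <= L)%Z ->
  Cmod (csum (zrange (N + 1) (N + H)) F -
        / IZR L * csum (zrange 0 (L - 1)) (fun j => csum (zrange (N + 1) (N + H)) (fun x => F (x + j)%Z)))
  <= 2 * (IZR L - 1).
Proof.
  intros HF HH HL.
  assert (HL' : 1 <= IZR L) by (apply IZR_le; lia).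
  assert (Hlen : INR (length (zrange 0 (L - 1))) = IZR L).
  { rewrite zrange_length, INR_IZR_INZ. f_equal. lia. }
  set (T := csum (zrange (N + 1) (N + H)) F).
  replace (T - / IZR L * csum (zrange 0 (L - 1)) (fun j => csum (zrange (N + 1) (N + H)) (fun x => F (x + j)%Z)))%C
    with (RtoC (/ IZR L) * csum (zrange 0 (L - 1)) (fun j => T - csum (zrange (N + 1) (N + H)) (fun x => F (x + j)%Z)))%C.
  2:{ unfold Cminus. rewrite csum_add, csum_const, Hlen.
      rewrite (csum_ext _ (fun x => - csum (zrange (N + 1) (N + H)) (fun x0 => F (x0 + x)%Z))%C
                 (fun x => (-1) * csum (zrange (N + 1) (N + H)) (fun x0 => F (x0 + x)%Z))%C) by (intros; ring).
      rewrite csum_scal. rewrite RtoC_inv by lra. field. intro Hc. apply RtoC_inj' in Hc. lra. }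
  rewrite Cmod_RtoC_mult. rewrite Rabs_right by (apply Rle_ge; left; apply Rinv_0_lt_compat; lra).
  eapply Rle_trans. apply Rmult_le_compat_l. left; apply Rinv_0_lt_compat; lra. apply Cmod_csum.
  eapply Rle_trans. apply Rmult_le_compat_l. left; apply Rinv_0_lt_compat; lra.
  apply (rsum_le _ _ (fun _ => 2 * (IZR L - 1))).
  - intros j Hj. apply zrange_In in Hj.
    pose proof (shift_diff_j F N H (Z.to_nat j) HF HH) as Hs.
    rewrite Z2Nat.id in Hs by lia. rewrite INR_IZR_INZ, Z2Nat.id in Hs by lia.
    assert (IZR j <= IZR L - 1) by (rewrite <- minus_IZR; apply IZR_le; lia). unfold T. lra.
  - rewrite rsum_const, Hlen. right. field. lra.
Qed.

Definition DI q N H b := csum (zrange (N + 1) (N + H)) (fun x => E q (- (b * x))).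
Definition DL q L b := csum (zrange 0 (L - 1)) (fun j => E q (- (b * j))).

Lemma main_identity q F N H L : (6 <= q)%Z -> (forall y, F y = F (y mod q)) ->
  csum (zrange 0 (L - 1)) (fun j => csum (zrange (N + 1) (N + H)) (fun x => F (x + j)%Z))
  = (/ IZR q * csum (zrange 0 (q - 1)) (fun b => Fhat q F b * DI q N H b * DL q L b))%C.
Proof.
  intros Hq HF.
  rewrite (csum_ext _ _ (fun j => / IZR q * csum (zrange (N + 1) (N + H)) (fun x =>
      csum (zrange 0 (q - 1)) (fun b => Fhat q F b * (E q (- (b * x)) * E q (- (b * j))))))%C).
  2:{ intros j _. rewrite <- csum_scal. apply csum_ext. intros x _.
      rewrite (inversion q F (x + j)) by auto. f_equal. apply csum_ext. intros b _.
      rewrite E_add. f_equal. f_equal. ring. }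
  rewrite csum_scal. f_equal.
  rewrite (csum_ext _ _ (fun j => csum (zrange 0 (q - 1)) (fun b => csum (zrange (N + 1) (N + H)) (fun x =>
      Fhat q F b * (E q (- (b * x)) * E q (- (b * j)))))))%C.
  2:{ intros j _. apply csum_swap. }
  rewrite csum_swap. apply csum_ext. intros b _.
  unfold DI, DL. rewrite <- Cmult_assoc, csum_mul, <- csum_scal. rewrite csum_swap.
  apply csum_ext. intros x _. rewrite csum_scal. reflexivity.
Qed.

Lemma conj_sum_E q l b : Cmod (csum l (fun x => E q (- (b * x)))) =
  Cmod (csum l (fun x => RtoC 1 * E q (b * x)))%C.
Proof.
  rewrite <- Cmod_conj, Cconj_csum. f_equal. apply csum_ext. intros. rewrite E_conj. 
  rewrite Z.opp_involutive. ring.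
Qed.

Lemma sumsq_range q m n : (6 <= q)%Z -> (m <= n + 1)%Z -> (n - m < q)%Z ->
  rsum (zrange 0 (q - 1)) (fun b => Cmod (csum (zrange m n) (fun x => E q (- (b * x)))) ^ 2)
  = IZR q * IZR (n - m + 1).
Proof.
  intros Hq Hmn Hn.
  rewrite (rsum_ext _ _ (fun b => Cmod (csum (zrange m n) (fun x => RtoC 1 * E q (b * x)))%C ^ 2)).
  2:{ intros. rewrite conj_sum_E. reflexivity. }
  rewrite parseval; auto. 2: apply zrange_NoDup. 2: apply zrange_modinj; lia.
  f_equal. rewrite rsum_const, Cmod_1, zrange_length, INR_IZR_INZ. rewrite Z2Nat.id by lia. rewrite pow1, Rmult_1_r. reflexivity.
Qed.

Lemma sumsq_Fhat q F : (6 <= q)%Z -> (forall y, Cmod (F y) <= 1) ->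
  rsum (zrange 0 (q - 1)) (fun b => Cmod (Fhat q F b) ^ 2) <= IZR q * IZR q.
Proof.
  intros Hq HF. unfold Fhat. rewrite parseval; auto. 2: apply zrange_NoDup. 2: apply zrange_modinj; lia.
  assert (0 < IZR q) by (apply IZR_lt; lia).
  apply Rmult_le_compat_l. lra.
  eapply Rle_trans. apply (rsum_le _ _ (fun _ => 1)).
  - intros y _. pose proof (HF y). pose proof (Cmod_ge_0 (F y)). simpl. nra.
  - rewrite rsum_const, zrange_length, INR_IZR_INZ. rewrite Z2Nat.id by lia. right. rewrite Rmult_1_r. f_equal. ring.
Qed.

Lemma core q F N H L tau K lam :
  (6 <= q)%Z -> (forall y, F y = F (y mod q)) -> (forall y, Cmod (F y) <= 1) ->
  (0 <= N)%Z -> (1 <= H)%Z -> (N + H <= q - 1)%Z -> (1 <= L <= q)%Z ->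
  0 < tau -> 0 <= K -> 0 < lam ->
  (forall b, (0 <= b <= q - 1)%Z -> Cmod (Fhat q F b) > tau -> Cmod (DI q N H b) <= K) ->
  Cmod (csum (zrange (N + 1) (N + H)) F) <=
    2 * (IZR L - 1) + tau * (lam * IZR H + IZR L / lam) / (2 * IZR L) + K * IZR q / tau.
Proof.
  intros Hq HFp HF HN HH HNH HL Htau HK Hlam HDI.
  assert (Hq' : 6 <= IZR q) by (apply IZR_le; lia).
  assert (HL' : 1 <= IZR L) by (apply IZR_le; lia).
  assert (HH' : 1 <= IZR H) by (apply IZR_le; lia).
  set (T := csum (zrange (N + 1) (N + H)) F).
  set (M := (/ IZR L * csum (zrange 0 (L - 1)) (fun j => csum (zrange (N + 1) (N + H)) (fun x => F (x + j)%Z)))%C).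
  assert (HT : Cmod T <= Cmod (T - M) + Cmod M).
  { replace T with ((T - M) + M)%C at 1 by ring. apply Cmod_triangle. }
  pose proof (smooth F N H L HF HH ltac:(lia)) as Hs. fold T M in Hs.
  assert (HM : Cmod M <= tau * (lam * IZR H + IZR L / lam) / (2 * IZR L) + K * IZR q / tau).
  2:{ lra. }
  unfold M. rewrite (main_identity q) by auto.
  rewrite <- RtoC_inv by lra. rewrite <- RtoC_inv by lra.
  rewrite Cmult_assoc, <- RtoC_mult, Cmod_RtoC_mult.
  rewrite Rabs_right by (apply Rle_ge; apply Rmult_le_pos; left; apply Rinv_0_lt_compat; lra).
  eapply Rle_trans. apply Rmult_le_compat_l. apply Rmult_le_pos; left; apply Rinv_0_lt_compat; lra.
  apply Cmod_csum.
  set (Zq := zrange 0 (q - 1)).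
  eapply Rle_trans. apply Rmult_le_compat_l. apply Rmult_le_pos; left; apply Rinv_0_lt_compat; lra.
  apply (rsum_le _ _ (fun b => tau / 2 * (lam * Cmod (DI q N H b) ^ 2 + / lam * Cmod (DL q L b) ^ 2)
                               + K * IZR L / tau * Cmod (Fhat q F b) ^ 2)).
  - intros b Hb. rewrite !Cmod_mult.
    assert (HDL : Cmod (DL q L b) <= IZR L).
    { unfold DL. eapply Rle_trans. apply Cmod_csum. 
      rewrite (rsum_ext _ _ (fun _ => 1)) by (intros; apply Cmod_E).
      rewrite rsum_const, zrange_length, INR_IZR_INZ, Z2Nat.id by lia. right. rewrite Rmult_1_r. f_equal. ring. }
    pose proof (Cmod_ge_0 (DL q L b)). pose proof (Cmod_ge_0 (DI q N H b)). pose proof (Cmod_ge_0 (Fhat q F b)).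
    set (x := Cmod (Fhat q F b)) in *. set (y := Cmod (DI q N H b)) in *. set (z := Cmod (DL q L b)) in *.
    assert (Hxy : x * y * z <= tau * y * z + K * IZR L / tau * x ^ 2).
    assert (Hc : 0 <= K * IZR L / tau) by (unfold Rdiv; apply Rmult_le_pos; [nra| left; apply Rinv_0_lt_compat; lra]).
    { destruct (Rle_dec x tau).
      - assert (0 <= K * IZR L / tau * x ^ 2) by (apply Rmult_le_pos; [auto | nra]).
        assert (x * (y * z) <= tau * (y * z)) by (apply Rmult_le_compat_r; nra). nra.
      - apply Rnot_le_lt in n. apply zrange_In in Hb.
        assert (y <= K) by (apply HDI; auto; lra).
        assert (x * y * z <= x * K * IZR L).
        { apply Rmult_le_compat; nra. }
        assert (x * K * IZR L <= K * IZR L / tau * x ^ 2).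
        { replace (K * IZR L / tau * x ^ 2) with ((x * K * IZR L) * (x / tau)) by (field; lra).
          assert (1 <= x / tau) by (apply (Rmult_le_reg_r tau); [lra|]; field_simplify; lra).
          assert (0 <= x * K * IZR L) by (apply Rmult_le_pos; nra). nra. }
        assert (0 <= tau * y * z) by (apply Rmult_le_pos; nra). lra. }
    assert (Hamgm : y * z <= (lam * y ^ 2 + / lam * z ^ 2) / 2).
    { assert (0 <= (lam * y - z) ^ 2) by apply pow2_ge_0.
      assert (0 < / lam) by (apply Rinv_0_lt_compat; lra).
      assert (0 <= / lam * (lam * y - z) ^ 2) by (apply Rmult_le_pos; lra).
      replace ((lam * y ^ 2 + / lam * z ^ 2) / 2) with (y * z + / lam * (lam * y - z) ^ 2 / 2) by (field; lra).
      lra. }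
    assert (tau * y * z <= tau / 2 * (lam * y ^ 2 + / lam * z ^ 2)).
    { replace (tau * y * z) with (tau * (y * z)) by ring. 
      replace (tau / 2 * (lam * y ^ 2 + / lam * z ^ 2)) with (tau * ((lam * y ^ 2 + / lam * z ^ 2) / 2)) by (field; lra).
      apply Rmult_le_compat_l; lra. }
    lra.
  - rewrite rsum_add, rsum_scal, rsum_add, rsum_scal, rsum_scal, rsum_scal.
    unfold DI, DL, Zq. rewrite !sumsq_range by lia.
    pose proof (sumsq_Fhat q F Hq HF) as HFs. unfold Zq in *.
    replace (N + H - (N + 1) + 1)%Z with H by ring. replace (L - 1 - 0 + 1)%Z with L by ring.
    set (s := rsum (zrange 0 (q - 1)) (fun b => Cmod (Fhat q F b) ^ 2)) in *.
    assert (0 <= K * IZR L / tau) by (apply Rmult_le_pos; [nra|]; left; apply Rinv_0_lt_compat; lra).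
    assert (K * IZR L / tau * s <= K * IZR L / tau * (IZR q * IZR q)) by (apply Rmult_le_compat_l; auto).
    assert (0 < / IZR L * / IZR q) by (apply Rmult_lt_0_compat; apply Rinv_0_lt_compat; lra).
    apply (Rle_trans _ (/ IZR L * / IZR q * (tau / 2 * (lam * (IZR q * IZR H) + / lam * (IZR q * IZR L)) +
      K * IZR L / tau * (IZR q * IZR q)))).
    + apply Rmult_le_compat_l; lra.
    + right. field. lra.
Qed.

Lemma perm_image (q : Z) (l : list Z) (g : Z -> Z) : NoDup l ->
  (forall x, In x l -> (0 <= g x <= q - 1)%Z) ->
  (forall x y, In x l -> In y l -> g x = g y -> x = y) ->
  Permutation (filter (fun t => existsb (fun s => Z.eqb (g s) t) l) (zrange 0 (q - 1))) (map g l).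
Proof.
  intros Hnd Hr Hinj. apply NoDup_Permutation.
  - apply NoDup_filter, zrange_NoDup.
  - apply NoDup_map_NoDup_ForallPairs; [|auto]. intros x y Hx Hy; apply Hinj; auto.
  - intros t. rewrite filter_In, in_map_iff, existsb_exists, zrange_In. split.
    + intros [_ [s [Hs Hst]]]. exists s. split; auto. apply Z.eqb_eq; auto.
    + intros [s [Hst Hs]]. subst. split. apply Hr; auto. exists s. split; auto. apply Z.eqb_eq; auto.
Qed.

Lemma setZ_In q S x : In x (setZ q S) <-> (0 <= x <= q - 1)%Z /\ S x = true.
Proof. unfold setZ. rewrite filter_In, zrange_In. tauto. Qed.

Lemma setZ_NoDup q S : NoDup (setZ q S).
Proof. apply NoDup_filter, zrange_NoDup. Qed.

Lemma affine_inj q c k x y : prime q -> ~ (q | c) ->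
  (0 <= x <= q - 1)%Z -> (0 <= y <= q - 1)%Z ->
  ((c * x + k) mod q = (c * y + k) mod q)%Z -> x = y.
Proof.
  intros Hp Hc Hx Hy H. assert (Hq : (1 < q)%Z) by (apply prime_ge_2 in Hp; lia).
  apply Z.cong_iff_0 in H. replace (c * x + k - (c * y + k))%Z with (c * (x - y))%Z in H by ring.
  apply Z.mod_divide in H; [|lia]. apply prime_mult in H; auto. destruct H as [H|H]. contradiction.
  destruct H as [j Hj]. destruct (Z.lt_trichotomy j 0) as [Hk0|[Hk0|Hk0]]; [nia|subst; lia|nia].
Qed.

Lemma csum_setZ_image q (l : list Z) (g : Z -> Z) (f : Z -> C) : NoDup l ->
  (forall x, In x l -> (0 <= g x <= q - 1)%Z) ->
  (forall x y, In x l -> In y l -> g x = g y -> x = y) ->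
  csum (filter (fun t => existsb (fun s => Z.eqb (g s) t) l) (zrange 0 (q - 1))) f
  = csum l (fun s => f (g s)).
Proof.
  intros. rewrite (csum_perm _ (map g l)). apply csum_map. apply perm_image; auto.
Qed.

Lemma E_cong q u u' : (q <> 0)%Z -> ((u - u') mod q = 0)%Z -> E q u = E q u'.
Proof. intros Hq H. rewrite (E_mod q u), (E_mod q u') by auto. f_equal. apply Z.cong_iff_0; auto. Qed.

Lemma Cmod_E_sub1_gen q m d : (6 <= q)%Z -> 0 < d <= 1/6 ->
  d <= Rabs (IZR m / IZR q) <= 1 - d -> Cmod (E q m - 1) >= 3 * d.
Proof.
  intros Hq Hd Hm. 
  assert (Hsq : Cmod (E q m - 1) ^ 2 >= 9 * d ^ 2).
  { unfold E. rewrite ee_sub1_sq. destruct (Rle_dec 0 (IZR m / IZR q)).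
    - rewrite Rabs_right in Hm by lra. apply cos_gap; lra.
    - rewrite Rabs_left in Hm by lra. rewrite <- cos_neg.
      replace (- (2 * PI * (IZR m / IZR q))) with (2 * PI * (- (IZR m / IZR q))) by ring.
      apply cos_gap; lra. }
  pose proof (Cmod_ge_0 (E q m - 1)).
  destruct (Rlt_dec (Cmod (E q m - 1)) (3 * d)); [|lra].
  assert (Cmod (E q m - 1) ^ 2 < (3 * d) ^ 2) by (simpl; nra).
  lra.
Qed.

Lemma DI_bound q N H b m d : (6 <= q)%Z -> (1 <= H)%Z -> ((b - m) mod q = 0)%Z ->
  0 < d <= 1/6 -> d <= Rabs (IZR m / IZR q) <= 1 - d ->
  Cmod (DI q N H b) <= 2 / (3 * d).
Proof.
  intros Hq HH Hbm Hd Hm.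
  pose proof (geomE q (- b) (N + 1) (Z.to_nat H)) as G.
  rewrite Z2Nat.id in G by lia.
  replace (N + 1 + H - 1)%Z with (N + H)%Z in G by ring.
  assert (HD : DI q N H b = csum (zrange (N + 1) (N + H)) (fun x => E q (x * - b))).
  { unfold DI. apply csum_ext. intros. f_equal. ring. }
  rewrite <- HD in G.
  assert (HE : E q (- b) = E q (- m)).
  { apply E_cong. lia. replace (- b - - m)%Z with (- (b - m))%Z by ring.
    rewrite Z.mod_opp_l_z; auto; lia. }
  pose proof (Cmod_E_sub1_gen q (- m) d Hq Hd) as Hg.
  rewrite opp_IZR in Hg. replace (- IZR m / IZR q) with (- (IZR m / IZR q)) in Hg by (field; apply not_0_IZR; lia).
  rewrite Rabs_Ropp in Hg. specialize (Hg Hm). rewrite <- HE in Hg.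
  apply (f_equal Cmod) in G. rewrite Cmod_mult in G.
  assert (Cmod (E q ((N + 1 + H) * - b) - E q ((N + 1) * - b)) <= 2).
  { unfold Cminus. eapply Rle_trans. apply Cmod_triangle. rewrite Cmod_opp, !Cmod_E. lra. }
  pose proof (Cmod_ge_0 (DI q N H b)).
  apply (Rmult_le_reg_l (3 * d)). lra.
  replace (3 * d * (2 / (3 * d))) with 2 by (field; lra).
  assert (3 * d * Cmod (DI q N H b) <= Cmod (E q (- b) - 1) * Cmod (DI q N H b)) by (apply Rmult_le_compat_r; lra).
  lra.
Qed.

Lemma mod0_of_eq q x t : x = (q * t)%Z -> (x mod q = 0)%Z.
Proof. intros ->. rewrite Z.mul_comm. apply Z_mod_mult. Qed.

Definition cred (q x : Z) : Z := if (2 * (x mod q) <=? q)%Z then (x mod q) else (x mod q - q)%Z.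

Lemma cred_props q x : (0 < q)%Z -> (2 * Z.abs (cred q x) <= q)%Z /\ exists t, cred q x = (x - q * t)%Z.
Proof.
  intros Hq. pose proof (Z.mod_pos_bound x q Hq). pose proof (Z.mod_eq x q ltac:(lia)).
  unfold cred. destruct (Z.leb_spec (2 * (x mod q)) q).
  - split. lia. exists (x / q)%Z. lia.
  - split. lia. exists (x / q + 1)%Z. lia.
Qed.

Definition Ffun (q h k winv a : Z) (S : Z -> bool) (z : Z) : C :=
  if Wset q h k winv S (z mod q) then E q (z * a) else 0%C.

Lemma Ffun_per q h k winv a S y : (0 < q)%Z -> Ffun q h k winv a S y = Ffun q h k winv a S (y mod q).
Proof.
  intros Hq. unfold Ffun. rewrite Z.mod_mod by lia. destruct (Wset _ _ _ _ _ _); auto.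
  apply E_cong. lia. apply Z.cong_iff_0. rewrite Z.mul_mod_idemp_l by lia. reflexivity.
Qed.

Lemma Ffun_bound q h k winv a S y : Cmod (Ffun q h k winv a S y) <= 1.
Proof. unfold Ffun. destruct (Wset _ _ _ _ _ _). rewrite Cmod_E; lra. rewrite Cmod_0; lra. Qed.

Lemma not_div_winv_h q h v winv : prime q -> (1 <= h <= q - 1)%Z -> ((4 * v * winv) mod q = 1)%Z ->
  ~ (q | winv * h)%Z.
Proof.
  intros Hp Hh Hw Hd. assert (Hq : (1 < q)%Z) by (apply prime_ge_2 in Hp; lia).
  apply prime_mult in Hd; auto. destruct Hd as [Hd|Hd].
  - assert ((4 * v * winv) mod q = 0)%Z. { apply Z.mod_divide. lia. apply Z.divide_mul_r. auto. }
    lia.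
  - apply Z.divide_pos_le in Hd; lia.
Qed.

Lemma not_div_h q h : prime q -> (1 <= h <= q - 1)%Z -> ~ (q | h)%Z.
Proof. intros Hp Hh Hd. apply Z.divide_pos_le in Hd; lia. Qed.

Lemma Fhat_link q h k v winv a S b : prime q -> (6 <= q)%Z -> (1 <= h <= q - 1)%Z ->
  ((4 * v * winv) mod q = 1)%Z ->
  Cmod (Fhat q (Ffun q h k winv a S) b) =
  e_abs (setZ q (dilate q h S)) (IZR (cred q (winv * (a + b))) / IZR q).
Proof.
  intros Hp Hq Hh Hw. set (c := cred q (winv * (a + b))).
  destruct (cred_props q (winv * (a + b)) ltac:(lia)) as [_ [t Ht]]. fold c in Ht.
  assert (Hq0 : (q <> 0)%Z) by lia.
  unfold Fhat.
  rewrite (csum_ext _ _ (fun y => if Wset q h k winv S y then E q (y * (a + b)) else 0%C)).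
  2:{ intros y Hy. apply zrange_In in Hy. unfold Ffun. rewrite Z.mod_small by lia.
      destruct (Wset _ _ _ _ _ _). rewrite E_add. f_equal. ring. ring. }
  rewrite <- csum_filter. unfold Wset.
  rewrite csum_setZ_image.
  2: apply setZ_NoDup.
  2:{ intros; pose proof (Z.mod_pos_bound (winv * h * x + k) q); lia. }
  2:{ intros x y Hx Hy Hxy. apply setZ_In in Hx, Hy.
      apply (affine_inj q (winv * h) k); try tauto. eapply not_div_winv_h; eauto. }
  rewrite (csum_ext _ _ (fun s => E q (k * (a + b)) * E q (h * s * c))%C).
  2:{ intros s _. rewrite E_add. apply E_cong; auto.
      rewrite Zminus_mod, Z.mul_mod_idemp_l, <- Zminus_mod by auto.
      apply (mod0_of_eq q _ (h * s * t)). rewrite Ht. ring. }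
  rewrite csum_scal, Cmod_mult, Cmod_E, Rmult_1_l.
  rewrite e_abs_E. unfold setZ at 1. unfold dilate.
  rewrite (csum_setZ_image q (setZ q S) (fun s => (h * s) mod q)).
  - f_equal. apply csum_ext. intros s _. apply E_cong; auto.
    rewrite Zminus_mod, Z.mul_mod_idemp_l, <- Zminus_mod by auto. rewrite Z.sub_diag. apply Z.mod_0_l. auto.
  - apply setZ_NoDup.
  - intros x _; pose proof (Z.mod_pos_bound (h * x) q); lia.
  - intros x y Hx Hy Hxy. apply setZ_In in Hx, Hy.
    apply (affine_inj q h 0); try tauto. apply not_div_h; auto. rewrite !Z.add_0_r. auto.
Qed.

Lemma exp_le' x y : x <= y -> exp x <= exp y.
Proof. intros [H|H]. left; apply exp_increasing; auto. subst; lra. Qed.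
Lemma ln_le' x y : 0 < x -> x <= y -> ln x <= ln y.
Proof. intros Hx [H|H]. left; apply ln_increasing; auto. subst; lra. Qed.

Lemma cube_mono x y : 0 <= x -> 0 <= y -> y ^ 3 <= x ^ 3 -> y <= x.
Proof.
  intros Hx Hy H. destruct (Rle_dec y x); auto. exfalso.
  assert (x < y) by lra.
  assert (x ^ 3 < y ^ 3).
  { simpl. assert (x * x <= y * y) by nra. assert (0 < y * y) by nra. assert (x * (x * x) < y * (y * y)) by nra. lra. }
  lra.
Qed.

Lemma Rpower_cube y : 0 < y -> (Rpower y (1/3)) ^ 3 = y.
Proof.
  intros Hy. rewrite <- Rpower_pow by (apply exp_pos).
  rewrite Rpower_mult. replace (1/3 * INR 3) with 1 by (simpl; field). apply Rpower_1; auto.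
Qed.

Lemma Rpower_le1 y c : 0 < y <= 1 -> 0 <= c -> Rpower y c <= 1.
Proof.
  intros Hy Hc. unfold Rpower. rewrite <- exp_0. apply exp_le'.
  assert (ln y <= 0) by (rewrite <- ln_1; apply ln_le'; lra). nra.
Qed.

Lemma Rpower_pos x y : 0 < Rpower x y.
Proof. apply exp_pos. Qed.

Lemma Rpower_pow4 q t : 0 < q -> Rpower q t = (Rpower q (t / 4)) ^ 4.
Proof.
  intros Hq. rewrite <- Rpower_pow by apply exp_pos. rewrite Rpower_mult. f_equal. simpl. field.
Qed.

Lemma Rpower_pow3 q t : 0 < q -> (Rpower q t) ^ 3 = Rpower q (t * 3).
Proof.
  intros Hq. rewrite <- Rpower_pow by apply exp_pos. rewrite Rpower_mult. f_equal. simpl. ring.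
Qed.

Lemma cardZ_le q S : (0 <= q)%Z -> IZR (cardZ q S) <= IZR q.
Proof.
  intros Hq. unfold cardZ, setZ. apply IZR_le.
  pose proof (filter_length_le S (zrange 0 (q - 1))). rewrite zrange_length in H. lia.
Qed.

Lemma final_ineq (n qR HR eps rho P X L K lam : R) :
  0 < rho -> 0 < eps <= 1/16 -> rho * qR <= n -> 1 <= HR -> 0 < qR ->
  X ^ 3 = n ^ 3 * (eps * HR / (rho * qR)) -> 4 <= X -> 8 * P / (3 * eps * rho) <= X ->
  X / 4 <= L <= X / 2 -> K = 4 * P / 3 -> 0 < P -> lam = 2 * (eps * n) / X ->
  2 * (L - 1) + eps * n * (lam * HR + L / lam) / (2 * L) + K * qR / (eps * n) < 2 * X.
Proof.
  intros Hrho Heps Hn HH Hq HX3 HX4 HXP HL HK HP Hlam.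
  assert (Hn0 : 0 < n) by nra.
  set (tau := eps * n) in *.
  assert (Htau : 0 < tau) by (unfold tau; nra).
  assert (HL0 : 0 < L) by lra.
  assert (E1 : tau * (lam * HR + L / lam) / (2 * L) = tau ^ 2 * HR / (X * L) + X / 4).
  { rewrite Hlam. field. repeat split; lra. }
  assert (E2 : tau ^ 2 * HR / (X * L) <= X / 4).
  { apply (Rle_trans _ (4 * tau ^ 2 * HR / X ^ 2)).
    - unfold Rdiv. replace (4 * tau ^ 2 * HR * / X ^ 2) with (tau ^ 2 * HR * / (X * (X / 4))) by (field; lra).
      apply Rmult_le_compat_l. apply Rmult_le_pos; [apply pow2_ge_0|lra].
      apply Rinv_le_contravar. nra. apply Rmult_le_compat_l; lra.
    - unfold tau. 
      assert (n ^ 2 * HR = X ^ 3 * (rho * qR) / (n * eps)).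
      { rewrite HX3. field. repeat split; nra. }
      replace (4 * (eps * n) ^ 2 * HR / X ^ 2) with (4 * eps ^ 2 * (n ^ 2 * HR) / X ^ 2) by (field; lra).
      rewrite H. replace (4 * eps ^ 2 * (X ^ 3 * (rho * qR) / (n * eps)) / X ^ 2) with (4 * eps * X * (rho * qR / n)) by (field; repeat split; nra).
      assert (rho * qR / n <= 1) by (apply (Rmult_le_reg_r n); [lra|]; field_simplify; lra).
      assert (0 <= rho * qR / n) by (apply Rmult_le_pos; [nra|]; left; apply Rinv_0_lt_compat; lra).
      assert (4 * eps * X * (rho * qR / n) <= 4 * eps * X) by (apply (Rmult_le_compat_l (4*eps*X)) in H0; nra).
      nra. }
  assert (E3 : K * qR / tau <= X / 2).
  { rewrite HK. unfold tau.
    apply (Rle_trans _ (4 * P / (3 * eps * rho))); [|lra].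
    replace (4 * P / 3 * qR / (eps * n)) with ((4 * P / 3) / eps * (qR / n)) by (field; lra).
    replace (4 * P / (3 * eps * rho)) with ((4 * P / 3) / eps * (1 / rho)) by (field; lra).
    apply Rmult_le_compat_l. apply Rmult_le_pos; [lra|]. left; apply Rinv_0_lt_compat; lra.
    apply (Rmult_le_reg_r (n * rho)). nra. field_simplify; nra. }
  rewrite E1. lra.
Qed.

Lemma m_range (P Q v cq aq u qR : R) : 6 <= qR -> 3 <= Q -> P = Q ^ 4 -> P <= qR -> 1 <= v < Q ->
  Rabs cq < 1 / P -> 5 * v / P <= Rabs u <= 1 / 2 -> Rabs (u - aq) <= 1 / (2 * qR) ->
  1 / (2 * P) <= Rabs (4 * v * cq - aq) <= 1 - 1 / (2 * P).
Proof.
  intros Hq HQ HP HPq Hv Hc Hu Hua.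
  assert (HP0 : 81 <= P) by (assert (Q*Q >= 9) by nra; rewrite HP; replace (Q^4) with ((Q*Q)*(Q*Q)) by ring; nra).
  assert (Ha1 : Rabs aq >= Rabs u - 1 / (2 * qR)).
  { pose proof (Rabs_triang (u - aq) aq). replace (u - aq + aq) with u in H by ring. lra. }
  assert (Ha2 : Rabs aq <= 1/2 + 1 / (2 * qR)).
  { pose proof (Rabs_triang (aq - u) u). replace (aq - u + u) with aq in H by ring.
    rewrite Rabs_minus_sym in H. lra. }
  assert (H4 : Rabs (4 * v * cq) = 4 * v * Rabs cq).
  { rewrite Rabs_mult, Rabs_right by lra. reflexivity. }
  assert (H4b : 4 * v * Rabs cq <= 4 * v / P).
  { assert (0 <= Rabs cq) by apply Rabs_pos. 
    replace (4 * v / P) with (4 * v * (1 / P)) by (field; lra). apply Rmult_le_compat_l; lra. }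
  assert (H4c : 4 * v / P <= 4 / 27).
  { apply (Rle_trans _ (4 * Q / P)).
    - apply Rmult_le_compat_r. left; apply Rinv_0_lt_compat; lra. lra.
    - rewrite HP. replace (4 * Q / Q ^ 4) with (4 * / Q ^ 3) by (field; lra).
      unfold Rdiv. apply Rmult_le_compat_l; [lra|]. apply Rinv_le_contravar; [lra|].
      assert (Q * Q >= 9) by nra. replace (Q^3) with ((Q*Q)*Q) by ring. nra. }
  assert (Hinv : 1 / (2 * qR) <= 1 / (2 * P)).
  { apply Rmult_le_compat_l. lra. apply Rinv_le_contravar; lra. }
  assert (HvP : 1 / P <= v / P) by (apply Rmult_le_compat_r; [left; apply Rinv_0_lt_compat|]; lra).
  assert (Hsplit : 5 * v / P = 4 * v / P + v / P) by (field; lra).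
  assert (H1P : 1 / P = 1 / (2 * P) + 1 / (2 * P)) by (field; lra).
  assert (Hsmall : 1 / (2 * P) <= 1 / 162) by (apply Rmult_le_compat_l; [lra|]; apply Rinv_le_contravar; lra).
  assert (Hq12 : 1 / (2 * qR) <= 1 / 12) by (apply Rmult_le_compat_l; [lra|]; apply Rinv_le_contravar; lra).
  split.
  - pose proof (Rabs_triang_inv aq (4 * v * cq)). rewrite <- Rabs_Ropp.
    replace (- (4 * v * cq - aq)) with (aq - 4 * v * cq) by ring. lra.
  - pose proof (Rabs_triang (4 * v * cq) (- aq)). rewrite Rabs_Ropp in H. unfold Rminus. lra.
Qed.

Lemma div_nonneg x y : 0 <= x -> 0 < y -> 0 <= x / y.
Proof. intros. unfold Rdiv. apply Rmult_le_pos; auto. left; apply Rinv_0_lt_compat; auto. Qed.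

Theorem lemma4 (rho1 : R) (Hrho : 0 < rho1 < 1) :
  exists eps0 : R, 0 < eps0 < 1 /\
  forall eps : R, 0 < eps < eps0 ->
  exists q0 : Z,
  forall q : Z, prime q -> (q >= q0)%Z ->
  forall S : Z -> bool, IZR (cardZ q S) >= rho1 * IZR q ->
  forall h : Z, (1 <= h <= q - 1)%Z ->
  (forall a : Z, (2 * Z.abs a <= q)%Z ->
     e_abs (setZ q (dilate q h S)) (IZR a / IZR q) > eps * IZR (cardZ q S) ->
     IZR (Z.abs a) < Rpower (IZR q) (1 - rho1 * eps ^ 2)) ->
  forall k v : Z, (1 <= v)%Z -> IZR v < Rpower (IZR q) (rho1 * eps ^ 2 / 4) ->
  forall winv : Z, ((4 * v * winv) mod q = 1)%Z ->
  forall u : R,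
    5 * IZR v * Rpower (IZR q) (- (rho1 * eps ^ 2)) <= Rabs u <= 1 / 2 ->
  forall a : Z, Rabs (u - IZR a / IZR q) <= 1 / (2 * IZR q) ->
  forall N H : Z, (0 <= N)%Z -> (1 <= H)%Z -> (N + H <= q - 1)%Z ->
  e_abs (filter (Wset q h k winv S) (zrange (N + 1) (N + H))) (IZR a / IZR q)
    < 2 * IZR (cardZ q S) * Rpower (eps * IZR H / (rho1 * IZR q)) (1 / 3).
Proof.
  exists (Rmin rho1 (1/16)). split.
  { split. apply Rmin_glb_lt; lra. pose proof (Rmin_l rho1 (1/16)); lra. }
  intros eps Heps.
  assert (Heps1 : eps <= rho1) by (pose proof (Rmin_l rho1 (1/16)); lra).
  assert (Heps2 : eps <= 1/16) by (pose proof (Rmin_r rho1 (1/16)); lra).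
  assert (Heps0 : 0 < eps) by lra.
  set (th := rho1 * eps ^ 2).
  assert (Hth : 0 < th <= 1/256).
  { unfold th. split. apply Rmult_lt_0_compat; [lra|]. apply pow_lt; lra.
    assert (eps ^ 2 <= 1/256) by (simpl; nra). 
    assert (0 <= eps ^ 2) by apply pow2_ge_0. nra. }
  set (C1 := (8 / (3 * eps * rho1)) ^ 3 / (rho1 ^ 2 * eps)).
  set (C2 := 64 / (rho1 ^ 2 * eps)).
  set (C3 := exp (4 * ln 3 / th)).
  assert (Hr2 : 0 < rho1 ^ 2 * eps) by (apply Rmult_lt_0_compat; [apply pow_lt|]; lra).
  assert (HC1 : 0 < C1).
  { unfold C1. apply Rdiv_lt_0_compat; auto. apply pow_lt. apply Rdiv_lt_0_compat; [lra|]. 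
    apply Rmult_lt_0_compat; lra. }
  assert (HC2 : 0 < C2) by (unfold C2; apply Rdiv_lt_0_compat; lra).
  assert (HC3 : 0 < C3) by apply exp_pos.
  exists (up (6 + C1 + C2 + C3)).
  intros q Hp Hqq S HS h Hh Hhyp k v Hv Hv2 winv Hw u Hu a Ha N H HN HH HNH.
  assert (HqR : 6 + C1 + C2 + C3 < IZR q).
  { destruct (archimed (6 + C1 + C2 + C3)) as [H1 _]. apply Z.ge_le in Hqq. apply IZR_le in Hqq. lra. }
  assert (Hq6 : (6 <= q)%Z) by (apply le_IZR; lra).
  set (qR := IZR q) in *.
  set (n := IZR (cardZ q S)) in *.
  set (P := Rpower qR th).
  set (Q := Rpower qR (th / 4)).
  assert (HqR0 : 0 < qR) by lra.
  assert (HPQ : P = Q ^ 4) by (apply Rpower_pow4; auto).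
  assert (HQ3 : 3 <= Q).
  { unfold Q, Rpower. rewrite <- (exp_ln 3) by lra. apply exp_le'.
    assert (ln C3 <= ln qR) by (apply ln_le'; lra).
    unfold C3 in H0. rewrite ln_exp in H0.
    apply (Rmult_le_compat_l (th / 4)) in H0; [|lra].
    replace (th / 4 * (4 * ln 3 / th)) with (ln 3) in H0 by (field; lra). lra. }
  assert (HPq : P <= qR).
  { unfold P. rewrite <- (Rpower_1 qR) at 2 by lra. apply Rle_Rpower; lra. }
  assert (HP3 : P ^ 3 <= qR).
  { unfold P. rewrite Rpower_pow3 by lra. rewrite <- (Rpower_1 qR) at 2 by lra. apply Rle_Rpower; lra. }
  assert (HP0 : 0 < P) by apply Rpower_pos.
  assert (HT : e_abs (filter (Wset q h k winv S) (zrange (N + 1) (N + H))) (IZR a / qR) =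
               Cmod (csum (zrange (N + 1) (N + H)) (Ffun q h k winv a S))).
  { unfold qR. rewrite e_abs_E, csum_filter. f_equal. apply csum_ext. intros x Hx. apply zrange_In in Hx.
    unfold Ffun. rewrite Z.mod_small by lia. reflexivity. }
  rewrite HT.
  set (X := n * Rpower (eps * IZR H / (rho1 * qR)) (1 / 3)).
  assert (HH1 : 1 <= IZR H) by (apply IZR_le; lia).
  assert (HHq : IZR H <= qR) by (apply IZR_le; lia).
  assert (Hn : rho1 * qR <= n) by lra.
  assert (Hnq : n <= qR) by (apply cardZ_le; lia).
  assert (Hy : 0 < eps * IZR H / (rho1 * qR)).
  { apply Rdiv_lt_0_compat; apply Rmult_lt_0_compat; lra. }
  assert (HX3 : X ^ 3 = n ^ 3 * (eps * IZR H / (rho1 * qR))).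
  { unfold X. rewrite Rpow_mult_distr, Rpower_cube; auto. }
  assert (HX0 : 0 <= X).
  { unfold X. apply Rmult_le_pos. nra. left; apply Rpower_pos. }
  assert (HX3lb : rho1 ^ 2 * eps * qR ^ 2 <= X ^ 3).
  { rewrite HX3. 
    assert ((rho1 * qR) ^ 3 <= n ^ 3) by (apply pow_incr; nra).
    assert (eps / (rho1 * qR) <= eps * IZR H / (rho1 * qR)).
    { unfold Rdiv. apply Rmult_le_compat_r. left; apply Rinv_0_lt_compat; nra. nra. }
    apply (Rle_trans _ ((rho1 * qR) ^ 3 * (eps / (rho1 * qR)))).
    - right. field. nra.
    - apply Rmult_le_compat; try lra. apply pow_le; nra. apply div_nonneg; nra. }
  assert (HX4 : 4 <= X).
  { apply cube_mono; try lra.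
    assert (rho1 ^ 2 * eps * qR >= 64).
    { assert (C2 <= qR) by lra. unfold C2 in H0. apply (Rmult_le_compat_l (rho1 ^ 2 * eps)) in H0; [|lra].
      replace (rho1 ^ 2 * eps * (64 / (rho1 ^ 2 * eps))) with 64 in H0 by (field; lra). lra. }
    assert (rho1 ^ 2 * eps * qR ^ 2 >= 64 * qR) by (simpl; nra). simpl in *. nra. }
  assert (HXP : 8 * P / (3 * eps * rho1) <= X).
  { apply cube_mono; try lra. apply div_nonneg; nra.
    apply (Rle_trans _ (rho1 ^ 2 * eps * qR ^ 2)); auto.
    replace ((8 * P / (3 * eps * rho1)) ^ 3) with ((8 / (3 * eps * rho1)) ^ 3 * P ^ 3) by (field; lra).
    assert (HC1q : C1 <= qR) by lra. unfold C1 in HC1q.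
    assert (0 <= (8 / (3 * eps * rho1)) ^ 3) by (apply pow_le; apply div_nonneg; nra).
    apply (Rle_trans _ ((8 / (3 * eps * rho1)) ^ 3 * qR)). apply Rmult_le_compat_l; auto.
    apply (Rmult_le_compat_l (rho1 ^ 2 * eps)) in HC1q; [|lra].
    replace (rho1 ^ 2 * eps * ((8 / (3 * eps * rho1)) ^ 3 / (rho1 ^ 2 * eps))) with ((8 / (3 * eps * rho1)) ^ 3) in HC1q by (field; lra).
    apply (Rmult_le_compat_r qR) in HC1q; [|lra]. simpl in *. nra. }
  assert (HXn : X <= n).
  { unfold X. rewrite <- (Rmult_1_r n) at 2. apply Rmult_le_compat_l. nra.
    apply Rpower_le1; [|lra]. split; auto.
    apply (Rmult_le_reg_r (rho1 * qR)). nra. field_simplify; nra. }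
  set (L := (up (X / 2) - 1)%Z).
  destruct (archimed (X / 2)) as [Hup1 Hup2].
  assert (HL1 : IZR L <= X / 2) by (unfold L; rewrite minus_IZR; lra).
  assert (HL2 : X / 2 - 1 < IZR L) by (unfold L; rewrite minus_IZR; lra).
  assert (HLb : (1 <= L <= q)%Z).
  { split. apply le_IZR. lra. apply le_IZR. fold qR. lra. }
  pose proof (core q (Ffun q h k winv a S) N H L (eps * n) (4 * P / 3) (2 * (eps * n) / X)
    Hq6 (fun y => Ffun_per q h k winv a S y ltac:(lia)) (Ffun_bound q h k winv a S) HN HH HNH HLb)
    as Hcore.
  assert (Htau : 0 < eps * n) by nra.
  specialize (Hcore Htau ltac:(lra) ltac:(apply Rdiv_lt_0_compat; lra)).
  assert (Hfin := final_ineq n qR (IZR H) eps rho1 P X (IZR L) (4 * P / 3) (2 * (eps * n) / X)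
     ltac:(lra) ltac:(lra) Hn HH1 HqR0 HX3 HX4 HXP ltac:(lra) eq_refl HP0 eq_refl).
  replace (2 * n * Rpower (eps * IZR H / (rho1 * qR)) (1 / 3)) with (2 * X) by (unfold X; ring).
  eapply Rle_lt_trans; [|exact Hfin].
  apply Hcore.
  intros b Hb Hbig.
  rewrite (Fhat_link q h k v winv a S b) in Hbig by auto.
  destruct (cred_props q (winv * (a + b)) ltac:(lia)) as [Hc2 [t Ht]].
  set (c := cred q (winv * (a + b))) in *.
  specialize (Hhyp c Hc2 Hbig).
  assert (HR1 : Rpower qR (1 - th) = qR / P).
  { replace (1 - th) with (1 + - th) by ring. rewrite Rpower_plus, Rpower_1, Rpower_Ropp by lra. reflexivity. }
  fold qR th in Hhyp. rewrite HR1 in Hhyp.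
  rewrite abs_IZR in Hhyp.
  assert (Hcq : Rabs (IZR c / qR) < 1 / P).
  { unfold Rdiv. rewrite Rabs_mult, (Rabs_right (/ qR)) by (left; apply Rinv_0_lt_compat; lra).
    apply (Rmult_lt_reg_r qR); [lra|]. field_simplify; lra. }
  set (m := (4 * v * c - a)%Z).
  assert (Hbm : ((b - m) mod q = 0)%Z).
  { pose proof (Z.mod_eq (4 * v * winv) q ltac:(lia)) as Hm. rewrite Hw in Hm.
    set (j := (4 * v * winv / q)%Z) in *.
    apply (mod0_of_eq q _ (4 * v * t - (a + b) * j)%Z).
    unfold m. rewrite Ht.
    assert (E4 : (4 * v * winv)%Z = (1 + q * j)%Z) by lia.
    transitivity ((a + b) - (4 * v * winv) * (a + b) + q * (4 * v * t))%Z; [ring|].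
    rewrite E4. ring. }
  assert (HmR : IZR m / qR = 4 * IZR v * (IZR c / qR) - IZR a / qR).
  { unfold m. rewrite minus_IZR, !mult_IZR. field. lra. }
  assert (Hd : 0 < 1 / (2 * P) <= 1 / 6).
  { split. apply Rdiv_lt_0_compat; lra.
    assert (81 <= P) by (assert (Q*Q >= 9) by nra; rewrite HPQ; replace (Q^4) with ((Q*Q)*(Q*Q)) by ring; nra).
    apply Rmult_le_compat_l. lra. apply Rinv_le_contravar; lra. }
  assert (Hv1 : 1 <= IZR v) by (apply IZR_le; lia).
  assert (Hrange := m_range P Q (IZR v) (IZR c / qR) (IZR a / qR) u qR ltac:(lra) HQ3 HPQ HPq
    ltac:(split; [lra| exact Hv2]) Hcq).
  rewrite Rpower_Ropp in Hu. fold P in Hu.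
  specialize (Hrange ltac:(split; [unfold Rdiv; lra | lra]) Ha).
  rewrite <- HmR in Hrange.
  pose proof (DI_bound q N H b m (1 / (2 * P)) Hq6 HH Hbm Hd Hrange) as HDI.
  replace (2 / (3 * (1 / (2 * P)))) with (4 * P / 3) in HDI by (field; lra). exact HDI.
Qed.
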